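(* Let $d\ge 0$ be an integer, let $G$ be any finite $d$-regular graph and let $\lambda>0$. Then \[ \frac{1}{|V(G)|}\log P_G(\lambda) \le \frac{1}{d+1}\log P_{K_{d+1}}(\lambda), \] equivalently $P_G(\lambda)\le P_{K_{d+1}}(\lambda)^{|V(G)|/(d+1)}$, with equality if and only if $G$ is a disjoint union of copies of $K_{d+1}$.
   Context: Graphs are finite, simple and have at least one vertex. A Widom--Rowlinson configuration on a graph $G$ is a map $\chi:V(G)\to\{0,1,2\}$ such that no vertex coloured $1$ is adjacent to a vertex coloured $2$. Let $\Omega(G)$ be the set of such configurations and $X_i(\chi)$ the number of vertices coloured $i$. The Widom--Rowlinson partition function is $P_G(\lambda)=\sum_{\chi\in\Omega(G)}\lambda^{X_1(\chi)+X_2(\chi)}$. $K_{d+1}$ denotes the complete graph on $d+1$ vertices. *)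

(* Defs.v *)
From mathcomp Require Import all_boot all_order all_algebra.
From mathcomp Require Import all_classical all_reals all_analysis.
Set Implicit Arguments. Unset Strict Implicit. Unset Printing Implicit Defensive.
Import Order.TTheory GRing.Theory Num.Theory.
Local Open Scope ring_scope.

Definition simple_graph (T : finType) (e : rel T) : Prop :=
  symmetric e /\ irreflexive e.

Definition regular (T : finType) (e : rel T) (d : nat) : Prop :=
  forall x : T, #|[set y | e x y]| = d.

Definition wr_config (T : finType) (e : rel T) (chi : {ffun T -> 'I_3}) : bool :=
  [forall x, forall y, e x y ==> ~~ ((val (chi x) == 1%N) && (val (chi y) == 2%N))].

Definition wr_occupied (T : finType) (chi : {ffun T -> 'I_3}) : nat :=
  #|[set x | val (chi x) != 0%N]|.

Definition wr_pf (R : realType) (T : finType) (e : rel T) (lambda : R) : R :=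
  \sum_(chi : {ffun T -> 'I_3} | wr_config e chi) lambda ^+ wr_occupied chi.

Definition complete_rel (n : nat) : rel 'I_n := fun i j => i != j.

Definition disjoint_union_of_cliques (T : finType) (e : rel T) (d : nat) : Prop :=
  exists (I : finType) (f : T -> I * 'I_d.+1),
    bijective f /\
    forall x y, e x y = ((f x).1 == (f y).1) && ((f x).2 != (f y).2).

(* Main.v *)
Require Import Defs.
From mathcomp Require Import all_boot all_order all_algebra.
From mathcomp Require Import all_classical all_reals all_analysis.
From mathcomp Require Import ring lra.
Set Implicit Arguments. Unset Strict Implicit. Unset Printing Implicit Defensive.
Import Order.TTheory GRing.Theory Num.Theory.
Local Open Scope ring_scope.
Section S.
Variable R : realType.
Definition rt (k : nat) (s : R) := s `^ (k%:R^-1).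
Lemma rtK k s : (0 < k)%N -> 0 <= s -> rt k s ^+ k = s.
Proof.
move=> k0 s0; rewrite /rt -powR_mulrn ?powR_ge0 // -powRrM mulVf ?powRr1 //.
by rewrite pnatr_eq0 -lt0n.
Qed.
Lemma rt_ge0 k s : 0 <= rt k s.
Proof. exact: powR_ge0. Qed.
Lemma rt_gt0 k s : 0 < s -> 0 < rt k s.
Proof. exact: powR_gt0. Qed.

Lemma holder_pos (T : finType) (J : {set T}) (x y : T -> R) :
  (0 < #|J|)%N -> (forall u, 0 <= x u) -> (forall u, 0 <= y u) ->
  (forall u, u \in J -> 0 < x u ^+ #|J| + y u ^+ #|J|) ->
  (\prod_(u in J) x u + \prod_(u in J) y u
     <= \prod_(u in J) rt #|J| (x u ^+ #|J| + y u ^+ #|J|))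
  /\ (forall u1 u2, u1 \in J -> u2 \in J -> x u1 * y u2 != x u2 * y u1 ->
   \prod_(u in J) x u + \prod_(u in J) y u
     < \prod_(u in J) rt #|J| (x u ^+ #|J| + y u ^+ #|J|)).
Proof.
move=> k0 x0 y0 s0.
set k := #|J|; set s := fun u => x u ^+ k + y u ^+ k.
rewrite -/(s _).
have -> : \prod_(u in J) rt k (x u ^+ k + y u ^+ k) = \prod_(u in J) rt k (s u) by [].
set Rr := \prod_(u in J) rt k (s u).
have r0 : 0 < Rr by apply: prodr_gt0 => u uJ; apply: rt_gt0; exact: s0.
set X := \prod_(u in J) x u; set Y := \prod_(u in J) y u.
have X0 : 0 <= X by apply: prodr_ge0.
have Y0 : 0 <= Y by apply: prodr_ge0.
pose E1 u := x u ^+ k / s u. pose E2 u := y u ^+ k / s u.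
have E10 : {in J, forall u, 0 <= E1 u}.
  by move=> u uJ; rewrite /E1 divr_ge0 ?exprn_ge0 // ltW // s0.
have E20 : {in J, forall u, 0 <= E2 u}.
  by move=> u uJ; rewrite /E2 divr_ge0 ?exprn_ge0 // ltW // s0.
have eP1 : \prod_(u in J) E1 u = (X / Rr) ^+ k.
  rewrite expr_div_n /X /Rr -!prodrXl prodf_div; congr (_ / _).
  by apply: eq_bigr => u uJ; rewrite rtK // ltW // s0.
have eP2 : \prod_(u in J) E2 u = (Y / Rr) ^+ k.
  rewrite expr_div_n /Y /Rr -!prodrXl prodf_div; congr (_ / _).
  by apply: eq_bigr => u uJ; rewrite rtK // ltW // s0.
have A1 := @leif_AGM R T (mem J) E1 E10.
have A2 := @leif_AGM R T (mem J) E2 E20.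
rewrite eP1 in A1; rewrite eP2 in A2.
set m1 := (\sum_(i in mem J) E1 i) / #|mem J|%:R in A1.
set m2 := (\sum_(i in mem J) E2 i) / #|mem J|%:R in A2.
have kE : #|mem J| = k by [].
have m12 : m1 + m2 = 1.
  rewrite /m1 /m2 -mulrDl -big_split /=.
  rewrite (eq_bigr (fun _ => 1)); last first.
    move=> u uJ; rewrite /E1 /E2 -mulrDl divff // gt_eqF //; exact: s0.
  by rewrite sumr_const kE divff // pnatr_eq0 -lt0n.
have m10 : 0 <= m1 by rewrite /m1 divr_ge0 // sumr_ge0.
have m20 : 0 <= m2 by rewrite /m2 divr_ge0 // sumr_ge0.
have XR0 : 0 <= X / Rr by rewrite divr_ge0 // ltW.
have YR0 : 0 <= Y / Rr by rewrite divr_ge0 // ltW.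
have le1 : X / Rr <= m1 by rewrite -(ler_pXn2r k0) ?nnegrE //; exact: A1.1.
have le2 : Y / Rr <= m2 by rewrite -(ler_pXn2r k0) ?nnegrE //; exact: A2.1.
have key : forall a b, a / Rr + b / Rr <= 1 -> a + b <= Rr.
  by move=> a b; rewrite -mulrDl ler_pdivrMr // mul1r.
have keys : forall a b, a / Rr + b / Rr < 1 -> a + b < Rr.
  by move=> a b; rewrite -mulrDl ltr_pdivrMr // mul1r.
split; first by apply: key; rewrite -m12; apply: lerD.
move=> u1 u2 u1J u2J neq.
apply: keys; rewrite -m12.
case C1: [forall i in mem J, forall j in mem J, E1 i == E1 j].
  case C2: [forall i in mem J, forall j in mem J, E2 i == E2 j].
    exfalso; move: neq; apply/negP; rewrite negbK.
    move/forall_inP/(_ u1 u1J)/forall_inP/(_ u2 u2J)/eqP: C1.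
    move/forall_inP/(_ u1 u1J)/forall_inP/(_ u2 u2J)/eqP: C2.
    rewrite /E1 /E2 => h2 h1.
    have s10 := s0 u1 u1J; have s20 := s0 u2 u2J.
    rewrite -(eqrXn2 k0) ?mulr_ge0 // !exprMn.
    have e1 : x u1 ^+ k = x u2 ^+ k / s u2 * s u1.
      by rewrite -h1 divfK // gt_eqF.
    have e2 : y u2 ^+ k = y u1 ^+ k / s u1 * s u2.
      by rewrite h2 divfK // gt_eqF.
    rewrite e1 e2; apply/eqP; field.
    by rewrite !gt_eqF.
  apply: ler_ltD => //.
  rewrite -(ltr_pXn2r k0) ?nnegrE //.
  by rewrite (lt_leif A2) C2.
apply: ltr_leD => //.
rewrite -(ltr_pXn2r k0) ?nnegrE //.
by rewrite (lt_leif A1) C1.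
Qed.

Section Finner.
Variables (T : finType) (N : T -> {set T}) (k : nat).
Hypothesis k0 : (0 < k)%N.
Hypothesis hN : forall j, #|[set u | j \in N u]| = k.

Definition loc (S : {set T}) (phi : {set T} -> R) :=
  forall A B, A :&: S = B :&: S -> phi A = phi B.

Lemma setU1_in (j : T) (A : {set T}) : j \in A -> j |: A = A.
Proof. by move=> jA; apply/setP => z; rewrite !inE; case: eqP => // ->. Qed.
Lemma setD1_notin (j : T) (A : {set T}) : j \notin A -> A :\ j = A.
Proof.
move=> jA; apply/setP => z; rewrite !inE; case: eqP => // -> /=.
by rewrite (negbTE jA).
Qed.

Definition tog (j : T) (A : {set T}) := if j \in A then A :\ j else j |: A.
Lemma tog_inv j : involutive (tog j).
Proof.
move=> A; rewrite {2}/tog; case: ifP => jA; rewrite /tog !inE eqxx /=.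
  by rewrite finset.setD1K.
by rewrite finset.setU1K // jA.
Qed.

Lemma pair_sum (j : T) (phi : {set T} -> R) :
  \sum_A (phi (A :\ j) + phi (j |: A)) = (\sum_A phi A) *+ 2.
Proof.
transitivity (\sum_A (phi A + phi (tog j A))).
  apply: eq_bigr => A _; rewrite /tog; case: ifP => jA.
    by rewrite setU1_in // addrC.
  by rewrite setD1_notin ?jA.
rewrite big_split /= mulr2n; congr (_ + _).
by rewrite [RHS](reindex_inj (inv_inj (tog_inv j))).
Qed.

Definition fstep (f : T -> {set T} -> R) (j : T) (u : T) (A : {set T}) :=
  if j \in N u then rt k (f u (A :\ j) ^+ k + f u (j |: A) ^+ k) else f u A.

Lemma fstep_gt0 (f : T -> {set T} -> R) (j : T) : (forall u A, 0 < f u A) -> forall u A, 0 < fstep f j u A.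
Proof.
move=> fp u A; rewrite /fstep; case: ifP => // _.
by apply: rt_gt0; rewrite addr_gt0 // exprn_gt0.
Qed.

Lemma fstep_loc (f : T -> {set T} -> R) (j : T) (D : {set T}) : j \in D -> (forall u, loc (N u :&: D) (f u)) ->
  forall u, loc (N u :&: (D :\ j)) (fstep f j u).
Proof.
move=> jD fl u A B /setP H; rewrite /fstep; case: ifP => ju.
  congr (rt k (_ ^+ k + _ ^+ k)); apply: fl; apply/setP => z; move: (H z);
  rewrite !inE; case: (eqVneq z j) => [->|_] //=; by rewrite ju jD.
apply: fl; apply/setP => z; move: (H z); rewrite !inE.
by case: (eqVneq z j) => [->|_] //=; rewrite ju.
Qed.

Lemma fstep_sum (f : T -> {set T} -> R) (j u : T) : (forall u A, 0 < f u A) ->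
  \sum_A fstep f j u A ^+ k = (if j \in N u then 2 else 1) * \sum_A f u A ^+ k.
Proof.
move=> fp; rewrite /fstep; case: ifP => _; last by rewrite mul1r.
rewrite (eq_bigr (fun A => f u (A :\ j) ^+ k + f u (j |: A) ^+ k)).
  by rewrite (pair_sum j (fun B => f u B ^+ k)) mulr_natl.
by move=> A _; rewrite rtK // addr_ge0 // exprn_ge0 // ltW.
Qed.

Lemma fstep_holder (f : T -> {set T} -> R) (j : T) (D : {set T}) (A : {set T}) :
  j \in D -> (forall u A, 0 < f u A) -> (forall u, loc (N u :&: D) (f u)) ->
  (\prod_u f u (A :\ j) + \prod_u f u (j |: A) <= \prod_u fstep f j u A) /\
  (forall u1 u2, j \in N u1 -> j \in N u2 ->
     f u1 (A :\ j) * f u2 (j |: A) != f u2 (A :\ j) * f u1 (j |: A) ->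
   \prod_u f u (A :\ j) + \prod_u f u (j |: A) < \prod_u fstep f j u A).
Proof.
move=> jD fp fl.
set J := [set u | j \in N u].
have hJ : #|J| = k by rewrite /J hN.
have hk : (0 < #|J|)%N by rewrite hJ.
have hp : forall u, u \in J ->
   0 < f u (A :\ j) ^+ #|J| + f u (j |: A) ^+ #|J|.
  by move=> u _; rewrite addr_gt0 // exprn_gt0.
have [H1 H2] := @holder_pos T J (fun u => f u (A :\ j)) (fun u => f u (j |: A)) hk
   (fun u => ltW (fp u _)) (fun u => ltW (fp u _)) hp.
have Z0 : 0 < \prod_(u | u \notin J) f u A by apply: prodr_gt0.
have e1 : \prod_(u | u \notin J) f u (A :\ j) = \prod_(u | u \notin J) f u A.
  apply: eq_bigr => u; rewrite inE => ju; apply: fl; apply/setP => z; rewrite !inE.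
  by case: (eqVneq z j) => [->|]; rewrite ?(negbTE ju) ?andbF.
have e2 : \prod_(u | u \notin J) f u (j |: A) = \prod_(u | u \notin J) f u A.
  apply: eq_bigr => u; rewrite inE => ju; apply: fl; apply/setP => z; rewrite !inE.
  by case: (eqVneq z j) => [->|]; rewrite ?(negbTE ju) ?andbF.
have e3 : \prod_(u | u \notin J) fstep f j u A = \prod_(u | u \notin J) f u A.
  by apply: eq_bigr => u; rewrite inE /fstep => /negbTE ->.
have e4 : \prod_(u in J) fstep f j u A =
     \prod_(u in J) rt #|J| (f u (A :\ j) ^+ #|J| + f u (j |: A) ^+ #|J|).
  by apply: eq_bigr => u; rewrite inE /fstep hJ => ->.
rewrite (bigID (fun u => u \in J)) [X in _ + X](bigID (fun u => u \in J)).
rewrite [X in _ <= X](bigID (fun u => u \in J)) [X in _ < X](bigID (fun u => u \in J)).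
rewrite /= e1 e2 e3 e4 -mulrDl.
split; first by rewrite ler_pM2r.
move=> u1 u2 j1 j2 neq; rewrite ltr_pM2r //; apply: (H2 u1 u2) => //; by rewrite inE.
Qed.

Lemma step_sum (f : T -> {set T} -> R) (j : T) (D : {set T}) :
  j \in D -> (forall u A, 0 < f u A) -> (forall u, loc (N u :&: D) (f u)) ->
  (\sum_A \prod_u f u A) *+ 2 <= \sum_A \prod_u fstep f j u A.
Proof.
move=> jD fp fl; rewrite -(pair_sum j (fun A => \prod_u f u A)).
by apply: ler_sum => A _; exact: (fstep_holder A jD fp fl).1.
Qed.

Lemma step_sum_lt (f : T -> {set T} -> R) (j : T) (D : {set T}) (A0 : {set T}) u1 u2 :
  j \in D -> (forall u A, 0 < f u A) -> (forall u, loc (N u :&: D) (f u)) ->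
  j \in N u1 -> j \in N u2 ->
  f u1 (A0 :\ j) * f u2 (j |: A0) != f u2 (A0 :\ j) * f u1 (j |: A0) ->
  (\sum_A \prod_u f u A) *+ 2 < \sum_A \prod_u fstep f j u A.
Proof.
move=> jD fp fl j1 j2 neq; rewrite -(pair_sum j (fun A => \prod_u f u A)).
rewrite (bigD1 A0) //= [X in _ < X](bigD1 A0) //=.
apply: ltr_leD; first exact: (fstep_holder A0 jD fp fl).2 j1 j2 neq.
by apply: ler_sum => A _; exact: (fstep_holder A jD fp fl).1.
Qed.

Definition cnorm : R := (#|{set T}|%:R)^-1.
Lemma cnorm_gt0 : 0 < cnorm.
Proof.
rewrite /cnorm invr_gt0 ltr0n; apply/card_gt0P; by exists finset.set0.
Qed.

Lemma step_prod (f : T -> {set T} -> R) (j : T) : (forall u A, 0 < f u A) ->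
  \prod_u (cnorm * \sum_A fstep f j u A ^+ k) =
  2 ^+ k * \prod_u (cnorm * \sum_A f u A ^+ k).
Proof.
move=> fp.
rewrite (eq_bigr (fun u => (if j \in N u then 2 else 1) * (cnorm * \sum_A f u A ^+ k))); last first.
  by move=> u _; rewrite fstep_sum // mulrCA.
rewrite big_split /=; congr (_ * _).
rewrite -big_mkcond /= prodr_const; congr (_ ^+ _).
by rewrite -(hN j) cardsE.
Qed.

Lemma finner_gen n : forall (D : {set T}), #|D| = n -> forall f : T -> {set T} -> R,
  (forall u A, 0 < f u A) -> (forall u, loc (N u :&: D) (f u)) ->
  (cnorm * \sum_A \prod_u f u A) ^+ k <= \prod_u (cnorm * \sum_A f u A ^+ k).
Proof.
elim: n => [|n IH] D hD f fp fl.
  move/eqP: hD; rewrite cards_eq0 => /eqP D0; subst D.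
  have e : forall u A, f u A = f u finset.set0.
    by move=> u A; apply: fl; rewrite !finset.setI0.
  have -> : \sum_A \prod_u f u A = \sum_(A : {set T}) \prod_u f u finset.set0.
    by apply: eq_bigr => A _; apply: eq_bigr => u _; exact: e.
  rewrite sumr_const -mulr_natl mulrA mulVf ?mul1r; last first.
    rewrite pnatr_eq0 -lt0n; apply/card_gt0P; by exists finset.set0.
  rewrite -prodrXl le_eqVlt; apply/orP; left; apply/eqP; apply: eq_bigr => u _.
  have -> : \sum_A f u A ^+ k = \sum_(A : {set T}) f u finset.set0 ^+ k.
    by apply: eq_bigr => A _; rewrite e.
  rewrite sumr_const -mulr_natl mulrA mulVf ?mul1r //.
  rewrite pnatr_eq0 -lt0n; apply/card_gt0P; by exists finset.set0.
have : (0 < #|D|)%N by rewrite hD.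
case/card_gt0P => j jD.
have hD' : #|D :\ j| = n by move: hD; rewrite (cardsD1 j) jD add1n => -[].
have IH' := IH _ hD' _ (fstep_gt0 j fp) (fstep_loc jD fl).
rewrite step_prod // in IH'.
have c0 := cnorm_gt0.
have S0 : forall g : T -> {set T} -> R, (forall u A, 0 < g u A) -> 0 <= \sum_A \prod_u g u A.
  move=> g gp; apply: sumr_ge0 => A _; apply: prodr_ge0 => u _; exact: ltW.
rewrite -(ler_pM2l (exprn_gt0 k (ltr0Sn R 1))).
apply: le_trans IH'.
rewrite -exprMn; apply: lerXn2r.
- by rewrite nnegrE mulr_ge0 // mulr_ge0 ?(ltW c0) //; apply: S0.
- by rewrite nnegrE mulr_ge0 ?(ltW c0) //; apply: S0; apply: fstep_gt0.
rewrite mulrCA ler_pM2l //.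
by rewrite mulr_natl; exact: step_sum jD fp fl.
Qed.

Lemma finner (f : T -> {set T} -> R) :
  (forall u A, 0 < f u A) -> (forall u, loc (N u) (f u)) ->
  (cnorm * \sum_A \prod_u f u A) ^+ k <= \prod_u (cnorm * \sum_A f u A ^+ k).
Proof.
move=> fp fl; apply: (finner_gen (erefl #|[set: T]|)) => // u A B.
rewrite !finset.setIT; exact: fl.
Qed.

Lemma finner_strict (f : T -> {set T} -> R) (j : T) (A0 : {set T}) u1 u2 :
  (forall u A, 0 < f u A) -> (forall u, loc (N u) (f u)) ->
  j \in N u1 -> j \in N u2 ->
  f u1 (A0 :\ j) * f u2 (j |: A0) != f u2 (A0 :\ j) * f u1 (j |: A0) ->
  (cnorm * \sum_A \prod_u f u A) ^+ k < \prod_u (cnorm * \sum_A f u A ^+ k).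
Proof.
move=> fp fl0 j1 j2 neq.
have fl : forall u, loc (N u :&: [set: T]) (f u).
  by move=> u A B; rewrite !finset.setIT; exact: fl0.
have jD : j \in [set: T] by rewrite inE.
have IH' := finner_gen (erefl #|[set: T] :\ j|) (fstep_gt0 j fp) (fstep_loc jD fl).
rewrite step_prod // in IH'.
have c0 := cnorm_gt0.
have S0 : forall g : T -> {set T} -> R, (forall u A, 0 < g u A) -> 0 <= \sum_A \prod_u g u A.
  move=> g gp; apply: sumr_ge0 => A _; apply: prodr_ge0 => u _; exact: ltW.
rewrite -(ltr_pM2l (exprn_gt0 k (ltr0Sn R 1))).
apply: lt_le_trans IH'.
rewrite -exprMn ltrXn2r; first by rewrite -lt0n.
- by rewrite mulr_ge0 // mulr_ge0 ?(ltW c0) //; apply: S0.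
rewrite mulrCA ltr_pM2l //.
by rewrite mulr_natl; exact: step_sum_lt jD fp fl j1 j2 neq.
Qed.

End Finner.


Lemma sum1 (I : finType) (x : R) : \sum_(i : I) x = x *+ #|I|.
Proof. by rewrite -sumr_const; apply: eq_bigl. Qed.
Lemma prod1 (I : finType) (x : R) : \prod_(i : I) x = x ^+ #|I|.
Proof. by rewrite -prodr_const; apply: eq_bigl. Qed.
Lemma prod_bool (I : finType) (b : I -> bool) : \prod_i ((b i)%:R : R) = ([forall i, b i])%:R.
Proof.
case: (boolP [forall i, b i]) => [/forallP H | /forallPn [i /negbTE Hi]].
  by apply: big1 => i _; rewrite H.
by rewrite (bigD1 i) //= Hi mul0r.
Qed.


Lemma sumset_prod (U : finType) (a : U -> R) :
  \sum_(B : {set U}) \prod_(x in B) a x = \prod_x (1 + a x).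
Proof.
have -> : \prod_x (1 + a x) = \prod_x \sum_(b : bool) (if b then a x else 1).
  by apply: eq_bigr => x _; rewrite big_bool /= addrC.
rewrite bigA_distr_bigA /=.
rewrite (reindex (fun g : {ffun U -> bool} => [set x | g x])) /=; last first.
  exists (fun B : {set U} => [ffun x => x \in B]) => [g _|B _].
    by apply/ffunP => x; rewrite ffunE inE.
  by apply/setP => x; rewrite inE ffunE.
apply: eq_bigr => g _; rewrite big_mkcond; apply: eq_bigr => x _; by rewrite inE.
Qed.

Lemma prod_if (U : finType) (S : {set U}) (a b : R) :
  \prod_x (if x \in S then a else b) = a ^+ #|S| * b ^+ #|~: S|.
Proof.
rewrite (bigID (fun x => x \in S)) /=; congr (_ * _).
  by rewrite -prodr_const; apply: eq_bigr => x ->.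
rewrite -prodr_const; rewrite (eq_bigl (fun x => x \in ~: S)); last by move=> x; rewrite inE.
by apply: eq_bigr => x; rewrite inE => /negbTE ->.
Qed.

Lemma sumS (U : finType) (S : {set U}) (lam c : R) :
  \sum_(B : {set U}) (lam ^+ #|B :&: S| + (B :&: S == finset.set0)%:R * c)
   = 2 ^+ #|~: S| * ((1 + lam) ^+ #|S| + c).
Proof.
rewrite big_split /= mulrDr; congr (_ + _).
  rewrite (eq_bigr (fun B : {set U} => \prod_(x in B) (if x \in S then lam else 1))); last first.
    move=> B _; rewrite -prodr_const big_mkcond [RHS]big_mkcond; apply: eq_bigr => x _.
    by rewrite inE; case: (x \in B).
  rewrite sumset_prod.
  rewrite (eq_bigr (fun x => if x \in S then 1 + lam else 2)); last first.
    by move=> x _; case: (x \in S).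
  by rewrite prod_if mulrC.
rewrite -mulr_suml; congr (_ * _).
rewrite (eq_bigr (fun B : {set U} => \prod_(x in B) (if x \in S then 0 else 1))); last first.
  move=> B _; rewrite big_mkcond.
  rewrite (eq_bigr (fun x => ((x \notin B :&: S) : bool)%:R)); last first.
    by move=> x _; rewrite inE; case: (x \in B); case: (x \in S).
  rewrite prod_bool.
  have -> : (B :&: S == finset.set0) = [forall x, x \notin B :&: S]; last by [].
  apply/eqP/fintype.forallP => [H x|H]; first by rewrite H inE.
  by apply/setP => x; rewrite [RHS]inE; apply/negbTE; exact: H.
rewrite sumset_prod.
rewrite (eq_bigr (fun x => if x \in S then 1 else 2)); last first.
  by move=> x _; case: (x \in S); rewrite ?addr0.
by rewrite prod_if expr1n mul1r.
Qed.

Section Graph.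
Variables (T : finType) (e : rel T) (lam : R).
Hypothesis sg : simple_graph e.

Definition Nb (x : T) : {set T} := x |: [set y | e x y].
Lemma Nb_sym x y : (x \in Nb y) = (y \in Nb x).
Proof.
case: sg => sy _; rewrite !inE eq_sym sy.
by [].
Qed.
Lemma Nb_self x : x \in Nb x.
Proof. by rewrite !inE eqxx. Qed.

Definition wA (A : {set T}) (x : T) : R :=
  if x \in A then lam else if A :&: Nb x == finset.set0 then 1 + lam else 1.

Definition Wt (chi : {ffun T -> 'I_3}) : R :=
  \prod_x (if val (chi x) != 0%N then lam else 1).

Lemma pf_sum : wr_pf e lam = \sum_chi (wr_config e chi)%:R * Wt chi.
Proof.
rewrite /wr_pf big_mkcond; apply: eq_bigr => chi _.
case: ifP => _; rewrite ?mul1r ?mul0r //.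
rewrite /wr_occupied -prodr_const big_mkcond; apply: eq_bigr => x _; by rewrite inE.
Qed.

Definition condA (A : {set T}) (x : T) (c : 'I_3) : bool :=
  ((val c == 1%N) == (x \in A)) && ((val c == 2%N) ==> (A :&: Nb x == finset.set0)).

Lemma cond_iff (A : {set T}) (chi : {ffun T -> 'I_3}) :
  [forall x, condA A x (chi x)] =
  (A == [set x | val (chi x) == 1%N]) && wr_config e chi.
Proof.
case: sg => sy irr.
apply/idP/idP.
  move/forallP => H.
  have HA : A = [set x | val (chi x) == 1%N].
    apply/setP => x; rewrite inE; by case/andP: (H x) => /eqP <-.
  rewrite HA eqxx /=.
  apply/forallP => x; apply/forallP => y; apply/implyP => exy; apply/negP => /andP[c1 c2].
  case/andP: (H y) => _ /implyP /(_ c2) /eqP H0.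
  have : x \in A :&: Nb y by rewrite !inE HA inE c1 sy exy orbT.
  by rewrite H0 inE.
case/andP => /eqP -> ok.
apply/forallP => x; rewrite /condA inE eqxx /=.
apply/implyP => c2; apply/eqP/setP => z; rewrite !inE.
apply/negP => /andP[cz] /orP[/eqP zx | exz].
  by subst z; rewrite (eqP c2) in cz.
move/forallP: ok => /(_ z) /forallP /(_ x).
by rewrite sy exz cz c2.
Qed.

Lemma pf_A : wr_pf e lam = \sum_A \prod_x wA A x.
Proof.
pose Phi A x (c : 'I_3) : R := (condA A x c)%:R * (if val c != 0%N then lam else 1).
have stepa : forall chi : {ffun T -> 'I_3}, (wr_config e chi)%:R * Wt chi = \sum_A \prod_x Phi A x (chi x).
  move=> chi.
  rewrite (eq_bigr (fun A =>
      ((A == [set x | val (chi x) == 1%N]) && wr_config e chi)%:R * Wt chi)); last first.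
    by move=> A _; rewrite big_split /= prod_bool cond_iff.
  case: (wr_config e chi); last by rewrite mul0r big1 // => A _; rewrite andbF mul0r.
  rewrite (bigD1 [set x | val (chi x) == 1%N]) //= eqxx big1 ?addr0 // => A /negbTE ->.
  by rewrite mul0r.
rewrite pf_sum (eq_bigr _ (fun chi _ => stepa chi)) exchange_big /=.
apply: eq_bigr => A _.
rewrite -(bigA_distr_bigA (fun x c => Phi A x c)) /=.
apply: eq_bigr => x _.
rewrite !big_ord_recl big_ord0 /Phi /condA /wA /=.
case: (x \in A); case: (A :&: Nb x == finset.set0); rewrite /=; lra.
Qed.


Variable d : nat.
Hypothesis reg : regular e d.

Lemma card_Nb x : #|Nb x| = d.+1.
Proof.
case: sg => _ irr.
rewrite /Nb cardsU1 reg inE irr.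
by [].
Qed.

Lemma hNb j : #|[set u | j \in Nb u]| = d.+1.
Proof.
have -> : [set u | j \in Nb u] = Nb j by apply/setP => u; rewrite inE Nb_sym.
exact: card_Nb.
Qed.

Definition fu (mu : R) (u : T) (A : {set T}) : R :=
  if A :&: Nb u == finset.set0 then 1 + lam else mu ^+ #|A :&: Nb u|.

Lemma pf_fu mu : mu ^+ d.+1 = lam -> wr_pf e lam = \sum_A \prod_u fu mu u A.
Proof.
move=> hmu; rewrite pf_A; apply: eq_bigr => A _.
rewrite (eq_bigr (fun x => (if x \in A then lam else 1) *
   (if A :&: Nb x == finset.set0 then 1 + lam else 1))); last first.
  move=> x _; rewrite /wA; case: ifP => xA; last by rewrite mul1r.
  have : x \in A :&: Nb x by rewrite inE xA Nb_self.
  by case: eqP => [->|_]; rewrite ?inE // mulr1.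
rewrite [RHS](eq_bigr (fun u => (if A :&: Nb u == finset.set0 then 1 + lam else 1) *
   mu ^+ #|A :&: Nb u|)); last first.
  move=> u _; rewrite /fu; case: eqP => [->|_]; last by rewrite mul1r.
  by rewrite cards0 expr0 mulr1.
rewrite !big_split /= mulrC; congr (_ * _).
rewrite [RHS](eq_bigr (fun u => \prod_a (if a \in A :&: Nb u then mu else 1))); last first.
  by move=> u _; rewrite -prodr_const big_mkcond.
rewrite exchange_big /=; apply: eq_bigr => a _.
case: (boolP (a \in A)) => aA.
  rewrite -hmu -(hNb a) -prodr_const big_mkcond; apply: eq_bigr => u _.
  by rewrite !inE aA.
by rewrite big1 // => u _; rewrite inE (negbTE aA).
Qed.


Hypothesis lam0 : 0 < lam.

Definition FK : R := (1 + lam) ^+ d.+1 + ((1 + lam) ^+ d.+1 - 1).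

Lemma card_sets : (#|{set T}|%:R : R) = 2 ^+ #|T|.
Proof.
have H := sumset_prod (fun _ : T => (1 : R)).
have E : \sum_(B : {set T}) \prod_(x in B) (1:R) = \sum_(B : {set T}) 1.
  by apply: eq_bigr => B _; rewrite big1_eq.
rewrite E sum1 prod1 in H; exact: H.
Qed.

Let mu := rt d.+1 lam.
Lemma mu_gt0 : 0 < mu. Proof. exact: rt_gt0. Qed.
Lemma muK : mu ^+ d.+1 = lam. Proof. by rewrite rtK // ltW. Qed.

Lemma fu_gt0 u A : 0 < fu mu u A.
Proof.
rewrite /fu; case: ifP => _; first by rewrite addr_gt0.
by rewrite exprn_gt0 // mu_gt0.
Qed.

Lemma fu_loc u : loc (Nb u) (fu mu u).
Proof. by move=> A B H; rewrite /fu H. Qed.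

Lemma sum_fu u : cnorm T * \sum_A fu mu u A ^+ d.+1 = FK / 2 ^+ d.+1.
Proof.
rewrite (eq_bigr (fun A => lam ^+ #|A :&: Nb u| +
   (A :&: Nb u == finset.set0)%:R * ((1 + lam) ^+ d.+1 - 1))); last first.
  move=> A _; rewrite /fu; case: eqP => [->|_].
    by rewrite cards0 expr0 mul1r; lra.
  by rewrite mul0r addr0 -exprM mulnC exprM muK.
rewrite sumS card_Nb /cnorm card_sets -(cardsC (Nb u)) exprD card_Nb.
rewrite /FK; field.
by rewrite !expf_neq0 // pnatr_eq0.
Qed.

Lemma scaleP : forall P : R,
  (cnorm T * P) ^+ d.+1 = P ^+ d.+1 / (2 ^+ d.+1) ^+ #|T| /\
  \prod_u (cnorm T * \sum_A fu mu u A ^+ d.+1) = FK ^+ #|T| / (2 ^+ d.+1) ^+ #|T|.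
Proof.
move=> P; split.
  by rewrite /cnorm card_sets exprMn mulrC exprVn -!exprM mulnC.
rewrite (eq_bigr (fun _ => FK / 2 ^+ d.+1)); last by move=> u _; exact: sum_fu.
by rewrite prod1 expr_div_n.
Qed.

Lemma main_le : wr_pf e lam ^+ d.+1 <= FK ^+ #|T|.
Proof.
have := @finner T Nb d.+1 (ltn0Sn d) hNb (fu mu) fu_gt0 fu_loc.
rewrite -pf_fu ?muK //.
case: (scaleP (wr_pf e lam)) => -> ->.
rewrite ler_pM2r // invr_gt0 exprn_gt0 // exprn_gt0 //.
Qed.


Lemma main_lt : (exists x y, e x y && (Nb x != Nb y)) ->
  wr_pf e lam ^+ d.+1 < FK ^+ #|T|.
Proof.
case=> x [y /andP[exy nxy]].
have [a ax ay] : exists2 a, a \in Nb x & a \notin Nb y.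
  apply/subsetPn; apply: contra nxy => sub.
  by rewrite eqEcard sub !card_Nb leqnn.
have xy : x \in Nb y by rewrite Nb_sym !inE exy orbT.
have ax' : a != x by apply: contraNneq ay => ->.
have e1 : [set a] :\ x = [set a].
  by apply/setP => z; rewrite !inE; case: (eqVneq z a) => [->|za]; rewrite ?ax' ?andbF.
have e2 : [set a] :&: Nb x = [set a].
  apply/setP => z; rewrite !inE; case: (eqVneq z a) => [->|za] //=.
  by move: ax; rewrite !inE.
have e3 : (x |: [set a]) :&: Nb y = [set x].
  apply/setP => z; rewrite !inE; case: (eqVneq z x) => [->|zx] /=.
    by move: xy; rewrite !inE.
  case: (eqVneq z a) => [->|] //=.
  by move: ay; rewrite !inE => /negbTE ->.
have e4 : [set a] :&: Nb y = finset.set0.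
  apply/setP => z; rewrite !inE; case: (eqVneq z a) => [->|] //=.
  by move: ay; rewrite !inE => /negbTE ->.
have e5 : (x |: [set a]) :&: Nb x = x |: [set a].
  apply/setP => z; rewrite !inE; case: (eqVneq z x) => [->|zx] //=.
  case: (eqVneq z a) => [->|] //=.
  by move: ax; rewrite !inE (negbTE ax').
have := @finner_strict T Nb d.+1 (ltn0Sn d) hNb (fu mu) x [set a] x y fu_gt0 fu_loc
  (Nb_self x) xy.
rewrite -pf_fu ?muK //.
case: (scaleP (wr_pf e lam)) => -> ->.
rewrite ltr_pM2r ?invr_gt0 ?exprn_gt0 //; apply.
rewrite /fu e1 e2 e3 e4 e5 eqxx.
have n1 : ([set a] == finset.set0) = false.
  by apply/negbTE/set0Pn; exists a; rewrite inE.
have n2 : ([set x] == finset.set0) = false.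
  by apply/negbTE/set0Pn; exists x; rewrite inE.
have n3 : ((x |: [set a]) == finset.set0) = false.
  by apply/negbTE/set0Pn; exists x; rewrite !inE eqxx.
have xa : (x == a) = false by rewrite eq_sym (negbTE ax').
rewrite n1 n2 n3 !cards1 cardsU1 !cards1 inE xa /=.
have m0 := mu_gt0.
apply/eqP => H.
have : mu ^+ 2 * lam = 0 by rewrite expr2; move: H; rewrite expr1; lra.
by apply/eqP; rewrite mulf_neq0 // ?gt_eqF // exprn_gt0.
Qed.

End Graph.

Lemma pK n (lam : R) : wr_pf (@complete_rel n) lam = (1 + lam) ^+ n + ((1 + lam) ^+ n - 1).
Proof.
have sg : simple_graph (@complete_rel n).
  by split => [x y|x]; rewrite /complete_rel ?eqxx // eq_sym.
have NbT : forall x, Nb (@complete_rel n) x = [set: 'I_n].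
  by move=> x; apply/setP => z; rewrite !inE /complete_rel eq_sym orbN.
rewrite (pf_A lam sg).
rewrite (eq_bigr (fun A => lam ^+ #|A :&: [set: 'I_n]| +
    (A :&: [set: 'I_n] == finset.set0)%:R * ((1 + lam) ^+ n - 1))); last first.
  move=> A _; rewrite /wA.
  rewrite (eq_bigr (fun x => if x \in A then lam else
     if A :&: [set: 'I_n] == finset.set0 then 1 + lam else 1)); last by move=> x _; rewrite NbT.
  rewrite finset.setIT; case: (eqVneq A finset.set0) => [->|nA].
    rewrite (eq_bigr (fun _ => 1 + lam)); last by move=> x _; rewrite inE.
    by rewrite prod1 card_ord cards0 expr0 mul1r; lra.
  by rewrite mul0r addr0 prod_if expr1n mulr1.
rewrite sumS finset.setCT cards0 expr0 mul1r cardsT card_ord.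
by [].
Qed.


Section Union.
Variables (T : finType) (e : rel T) (d : nat).
Hypothesis sg : simple_graph e.
Hypothesis reg : regular e d.

Definition cl_pred (S : {set T}) := [exists x, S == Nb e x].
Definition clI := {S : {set T} | cl_pred S}.
Lemma NbP x : cl_pred (Nb e x).
Proof. by apply/existsP; exists x. Qed.
Definition cf (x : T) : clI * 'I_d.+1 :=
  (exist _ (Nb e x) (NbP x), inord (index x (enum (Nb e x)))).
Definition cg (x0 : T) (p : clI * 'I_d.+1) : T := nth x0 (enum (val p.1)) p.2.

Hypothesis H : forall x y, e x y -> Nb e x = Nb e y.

Lemma size_enum_Nb x : size (enum (Nb e x)) = d.+1.
Proof. by rewrite -cardE (card_Nb sg reg). Qed.

Lemma idx_lt x : (index x (enum (Nb e x)) < d.+1)%N.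
Proof. by rewrite -(size_enum_Nb x) index_mem mem_enum Nb_self. Qed.

Lemma Nb_mem w z : z \in Nb e w -> Nb e z = Nb e w.
Proof.
rewrite !inE => /orP[/eqP -> //|ewz]; by rewrite (H ewz).
Qed.

Lemma cfK x0 : cancel cf (cg x0).
Proof.
move=> x; rewrite /cg /cf /= inordK ?idx_lt // nth_index // mem_enum Nb_self //.
Qed.

Lemma cgK x0 : cancel (cg x0) cf.
Proof.
case=> [[S PS] i]; rewrite /cg /=.
case/existsP: (PS) => w /eqP SE.
have sz : size (enum S) = d.+1 by rewrite SE size_enum_Nb.
set z := nth x0 (enum S) i.
have zS : z \in S by rewrite -mem_enum mem_nth // sz.
have Nz : Nb e z = S by rewrite (Nb_mem (_ : z \in Nb e w)) -?SE.
rewrite /cf; congr (_, _).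
  by apply: val_inj => /=.
rewrite Nz; apply: val_inj; rewrite [LHS]inordK; last by rewrite -sz index_mem mem_enum.
by rewrite index_uniq ?enum_uniq // sz.
Qed.

Lemma cf_edge x y : e x y = ((cf x).1 == (cf y).1) && ((cf x).2 != (cf y).2).
Proof.
case: sg => sy irr.
have E1 : ((cf x).1 == (cf y).1) = (Nb e x == Nb e y) by rewrite -val_eqE.
have E2 : ((cf x).2 == (cf y).2) = (index x (enum (Nb e x)) == index y (enum (Nb e y))).
  by rewrite -val_eqE /= !inordK ?idx_lt.
rewrite E1 E2; apply/idP/idP.
  move=> exy; rewrite (H exy) eqxx /=; apply/negP => /eqP eqi.
  have xs : x \in enum (Nb e x) by rewrite mem_enum Nb_self.
  have ys : y \in enum (Nb e x) by rewrite mem_enum (H exy) Nb_self.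
  rewrite -(H exy) in eqi.
  have : nth x (enum (Nb e x)) (index x (enum (Nb e x))) =
         nth x (enum (Nb e x)) (index y (enum (Nb e x))) by rewrite eqi.
  rewrite nth_index // (set_nth_default y) ?index_mem // nth_index // => xy.
  by subst y; rewrite irr in exy.
case/andP => /eqP NE neq.
have : y \in Nb e x by rewrite NE Nb_self.
rewrite !inE => /orP[/eqP yx|] //.
by subst y; rewrite eqxx in neq.
Qed.

Lemma build_union : (0 < #|T|)%N -> disjoint_union_of_cliques e d.
Proof.
case/card_gt0P => x0 _.
exists clI; exists cf; split; last exact: cf_edge.
by exists (cg x0); [exact: cfK | exact: cgK].
Qed.

End Union.

Lemma union_pf (T : finType) (e : rel T) (d : nat) (lam : R) (I : finType)
  (f : T -> I * 'I_d.+1) : bijective f ->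
  (forall x y, e x y = ((f x).1 == (f y).1) && ((f x).2 != (f y).2)) ->
  wr_pf e lam = wr_pf (@complete_rel d.+1) lam ^+ #|I|.
Proof.
case=> g fK gK hE.
rewrite -prod1 pf_sum.
under eq_bigr do rewrite pf_sum.
rewrite bigA_distr_bigA /=.
pose h (Psi : {ffun I -> {ffun 'I_d.+1 -> 'I_3}}) : {ffun T -> 'I_3} :=
  [ffun x => Psi (f x).1 (f x).2].
rewrite (reindex h) /=; last first.
  exists (fun chi : {ffun T -> 'I_3} => [ffun i => [ffun j => chi (g (i, j))]]) => [Psi _|chi _].
    by apply/ffunP => i; apply/ffunP => j; rewrite !ffunE gK.
  by apply/ffunP => x; rewrite !ffunE -surjective_pairing fK.
apply: eq_bigr => Psi _.
rewrite big_split /= prod_bool; congr (_ * _).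
  have -> : wr_config e (h Psi) = [forall i, wr_config (@complete_rel d.+1) (Psi i)]; last by [].
  apply/idP/idP.
    move=> ok; apply/fintype.forallP => i.
    apply/fintype.forallP => a; apply/fintype.forallP => b; apply/implyP => ab.
    move/fintype.forallP: ok => /(_ (g (i, a))) /fintype.forallP /(_ (g (i, b))).
    by rewrite hE !gK /= eqxx (ab : a != b) /= /h !ffunE !gK.
  move/fintype.forallP => ok; apply/fintype.forallP => x; apply/fintype.forallP => y.
  apply/implyP; rewrite hE => /andP[/eqP E12 ne].
  move: (ok (f x).1) => /fintype.forallP /(_ (f x).2) /fintype.forallP /(_ (f y).2).
  by rewrite /complete_rel ne /h !ffunE E12.
rewrite /Wt pair_big /=.
rewrite (reindex g) /=; last by exists f => p _; [exact: gK | exact: fK].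
apply: eq_bigr => p _; by rewrite ffunE gK.
Qed.

Lemma ln_cmp (P F : R) (n k : nat) : 0 < P -> 0 < F -> (0 < n)%N -> (0 < k)%N ->
  ((n%:R^-1 * ln P <= k%:R^-1 * ln F) = (P ^+ k <= F ^+ n)) /\
  (n%:R^-1 * ln P = k%:R^-1 * ln F <-> P ^+ k = F ^+ n).
Proof.
move=> P0 F0 n0 k0.
have nR : (n%:R : R) != 0 by rewrite pnatr_eq0 -lt0n.
have kR : (k%:R : R) != 0 by rewrite pnatr_eq0 -lt0n.
have c0 : 0 < (n%:R * k%:R : R) by rewrite mulr_gt0 // ltr0n.
have e1 : n%:R^-1 * ln P = (ln P *+ k) / (n%:R * k%:R) by rewrite -mulr_natr; field; rewrite nR kR.
have e2 : k%:R^-1 * ln F = (ln F *+ n) / (n%:R * k%:R) by rewrite -mulr_natr; field; rewrite nR kR.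
rewrite e1 e2 -!lnXn //.
have Pk : P ^+ k \in Num.pos by rewrite posrE exprn_gt0.
have Fn : F ^+ n \in Num.pos by rewrite posrE exprn_gt0.
split; first by rewrite ler_pM2r ?invr_gt0 // (ler_ln Pk Fn).
split=> [H|->] //.
apply: ln_inj => //.
by move: H => /(congr1 (fun z => z * (n%:R * k%:R))); rewrite !divfK // gt_eqF.
Qed.

End S.

Unset Implicit Arguments.

Theorem corollary1 (R : realType) (d : nat) (T : finType) (e : rel T) (lambda : R) :
  simple_graph e -> (0 < #|T|)%N -> regular e d -> 0 < lambda ->
  (#|T|%:R^-1 * ln (wr_pf e lambda)
     <= (d.+1)%:R^-1 * ln (wr_pf (@complete_rel d.+1) lambda))
  /\
  (#|T|%:R^-1 * ln (wr_pf e lambda)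
     = (d.+1)%:R^-1 * ln (wr_pf (@complete_rel d.+1) lambda)
   <-> disjoint_union_of_cliques e d).
Proof.
move=> sg n0 reg lam0.
have P0 : 0 < wr_pf e lambda.
  rewrite (pf_A lambda sg) (bigD1 finset.set0) //=.
  have a0 : 0 < \prod_x wA e lambda finset.set0 x.
    by apply: prodr_gt0 => x _; rewrite /wA; case: ifP => _; [|case: ifP => _]; rewrite ?ltr01 // addr_gt0.
  have b0 : 0 <= \sum_(A | A != finset.set0) \prod_x wA e lambda A x.
    apply: sumr_ge0 => A _; apply: prodr_ge0 => x _; rewrite /wA.
    by case: ifP => _; [|case: ifP => _]; rewrite ?ler01 // ltW // addr_gt0.
  lra.
have F0 : 0 < wr_pf (@complete_rel d.+1) lambda.
  rewrite pK.
  have : 1 <= (1 + lambda) ^+ d.+1 by rewrite exprn_ege1 // lerDl ltW.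
  lra.
have [Hle Heq] := ln_cmp P0 F0 n0 (ltn0Sn d).
split.
  rewrite Hle pK.
  exact: (main_le sg reg lam0).
rewrite Heq; split.
  move=> E.
  case: (boolP [exists x, exists y, e x y && (Nb e x != Nb e y)]).
    move/existsP => [x /existsP [y hxy]].
    have := main_lt sg reg lam0 (ex_intro _ x (ex_intro _ y hxy)).
    by rewrite /FK -pK E ltxx.
  move=> hn; apply: (build_union sg reg) => // x y exy.
  apply/eqP; move: hn; apply: contraNT => neq.
  by apply/existsP; exists x; apply/existsP; exists y; rewrite exy.
case=> I [f [bf hE]].
rewrite (union_pf lambda bf hE) -exprM.
by rewrite (bij_eq_card bf) card_prod card_ord.
Qed.
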